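(* Let $M$ be a countable transitive model of $\mathrm{ZFU}_R$, $\mathbb{P}\in M$ a forcing poset, and $f\in M$ a function whose domain is an antichain of $\mathbb{P}$ and whose values lie in $M^{\mathbb{P}}$. Then there is $\dot v\in M^{\mathbb{P}}$ such that $p\Vdash\dot v=f(p)$ for every $p\in dom(f)$.
   Context: $\mathrm{ZFU}_R$ is ZF with urelements (language $\{\in,\mathcal{A}\}$, $\mathcal{A}$ the urelement predicate, Extensionality only for sets) formulated with Replacement rather than Collection, without AC. A $\mathbb{P}$-name is a set $\dot x$ of ordered pairs $\langle y,p\rangle$ with $p\in\mathbb{P}$ and $y$ either a $\mathbb{P}$-name or a urelement, such that whenever $\langle a,p\rangle,\langle y,q\rangle\in\dot x$ with $a$ a urelement and $a\neq y$, $p$ and $q$ are incompatible. $M^{\mathbb{P}}$ is the set of $\mathbb{P}$-names in $M$. For an $M$-generic filter $G$ and $\dot x\in M^{\mathbb{P}}$: $\dot x_G=a$ if $a$ is a urelement with $\langle a,p\rangle\in\dot x$ for some $p\in G$; otherwise $\dot x_G=\{\dot y_G:\langle\dot y,p\rangle\in\dot x,\ \dot y\in M^{\mathbb{P}},\ p\in G\}$. $M[G]=\{\dot x_G:\dot x\in M^{\mathbb{P}}\}$. $p\Vdash\varphi(\dot x_1,\dots,\dot x_n)$ means that for every $M$-generic $G$ with $p\in G$, $M[G]\models\varphi(\dot x_{1G},\dots,\dot x_{nG})$. *)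

(* Defs.v *)
(* The ambient (meta-)universe is an abstract type V with a membership
   relation [mem] and an urelement predicate [atom], assumed to satisfy
   the axioms of ZFU (record [Ambient]). *)
From Stdlib Require Import Arith.

Section ZFU.

Context {V : Type} (mem : V -> V -> Prop) (atom : V -> Prop).

Definition isSet (x : V) : Prop := ~ atom x.

Record Ambient : Prop := {
  amb_ext : forall x y, isSet x -> isSet y -> (forall z, mem z x <-> mem z y) -> x = y;
  amb_atom_empty : forall a z, atom a -> ~ mem z a;
  amb_wf : well_founded (fun z x => mem z x);
  amb_pair : forall x y, exists z, isSet z /\ forall w, mem w z <-> (w = x \/ w = y);
  amb_union : forall x, exists u, isSet u /\
      forall z, mem z u <-> exists y, mem y x /\ mem z y;
  amb_power : forall x, exists p, isSet p /\
      forall y, mem y p <-> (isSet y /\ forall z, mem z y -> mem z x);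
  amb_sep : forall (Q : V -> Prop) a, exists b, isSet b /\
      forall z, mem z b <-> (mem z a /\ Q z);
  amb_repl : forall (R : V -> V -> Prop) a,
      (forall x y y', mem x a -> R x y -> R x y' -> y = y') ->
      exists b, isSet b /\ forall y, mem y b <-> exists x, mem x a /\ R x y;
  amb_inf : exists I, isSet I /\ (exists e, isSet e /\ (forall z, ~ mem z e) /\ mem e I) /\
      forall x, mem x I -> exists s, mem s I /\ isSet s /\
        forall z, mem z s <-> (mem z x \/ z = x)
}.

Inductive form : Type :=
| Fmem : nat -> nat -> form
| Feq : nat -> nat -> form
| Fatom : nat -> form
| Fbot : form
| Fimp : form -> form -> form
| Fall : nat -> form -> form.

Definition upd (e : nat -> V) (i : nat) (x : V) : nat -> V :=
  fun n => if Nat.eqb n i then x else e n.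

Fixpoint sat (M : V -> Prop) (e : nat -> V) (phi : form) : Prop :=
  match phi with
  | Fmem i j => mem (e i) (e j)
  | Feq i j => e i = e j
  | Fatom i => atom (e i)
  | Fbot => False
  | Fimp a b => sat M e a -> sat M e b
  | Fall i a => forall x, M x -> sat M (upd e i x) a
  end.

Record ModelZFUR (M : V -> Prop) : Prop := {
  m_ext : forall x y, M x -> M y -> isSet x -> isSet y ->
      (forall z, M z -> (mem z x <-> mem z y)) -> x = y;
  m_atom_empty : forall a, M a -> atom a -> forall z, M z -> ~ mem z a;
  m_found : forall x, M x -> (exists z, M z /\ mem z x) ->
      exists y, M y /\ mem y x /\ forall z, M z -> mem z y -> ~ mem z x;
  m_pair : forall x y, M x -> M y -> exists z, M z /\ isSet z /\ mem x z /\ mem y z;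
  m_union : forall x, M x -> exists u, M u /\ isSet u /\
      forall y z, M y -> M z -> mem z y -> mem y x -> mem z u;
  m_power : forall x, M x -> exists p, M p /\ isSet p /\
      forall y, M y -> isSet y -> (forall z, M z -> mem z y -> mem z x) -> mem y p;
  m_inf : exists I, M I /\ isSet I /\
      (exists e, M e /\ isSet e /\ (forall z, M z -> ~ mem z e) /\ mem e I) /\
      forall x, M x -> mem x I -> exists s, M s /\ mem s I /\ isSet s /\
        forall z, M z -> (mem z s <-> (mem z x \/ z = x));
  m_sep : forall (phi : form) (i : nat) (e : nat -> V), (forall n, M (e n)) ->
      forall a, M a -> isSet a -> exists b, M b /\ isSet b /\
        forall x, M x -> (mem x b <-> (mem x a /\ sat M (upd e i x) phi));
  m_repl : forall (phi : form) (i j : nat) (e : nat -> V), (forall n, M (e n)) ->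
      forall a, M a ->
      (forall x, M x -> mem x a -> exists y, M y /\ sat M (upd (upd e i x) j y) phi /\
          forall y', M y' -> sat M (upd (upd e i x) j y') phi -> y' = y) ->
      exists b, M b /\ isSet b /\
        forall y, M y -> (mem y b <-> exists x, M x /\ mem x a /\ sat M (upd (upd e i x) j y) phi)
}.

Definition CTM (M : V -> Prop) : Prop :=
  (exists m, isSet m /\ forall x, M x <-> mem x m) /\
  (forall x y, M x -> mem y x -> M y) /\
  (exists enum : nat -> V, forall x, M x -> exists n, enum n = x) /\
  ModelZFUR M.

Definition IsPair (c x y : V) : Prop :=
  isSet c /\ forall z, mem z c <->
    ((isSet z /\ forall w, mem w z <-> w = x) \/
     (isSet z /\ forall w, mem w z <-> (w = x \/ w = y))).

Definition le (Le p q : V) : Prop := exists c, mem c Le /\ IsPair c p q.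

Definition ForcingPoset (M : V -> Prop) (P Le : V) : Prop :=
  M P /\ M Le /\ isSet P /\ isSet Le /\
  (forall c, mem c Le -> exists p q, IsPair c p q /\ mem p P /\ mem q P) /\
  (forall p, mem p P -> le Le p p) /\
  (forall p q r, mem p P -> mem q P -> mem r P -> le Le p q -> le Le q r -> le Le p r) /\
  (forall p q, mem p P -> mem q P -> le Le p q -> le Le q p -> p = q).

Definition compatible (P Le p q : V) : Prop :=
  exists r, mem r P /\ le Le r p /\ le Le r q.

Inductive IsName (P Le : V) (x : V) : Prop :=
| IsName_intro :
    isSet x ->
    (forall c, mem c x -> exists y p, IsPair c y p /\ mem p P /\ (atom y \/ IsName P Le y)) ->
    (forall c d a p y q, mem c x -> mem d x -> IsPair c a p -> IsPair d y q ->
        atom a -> a <> y -> ~ compatible P Le p q) ->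
    IsName P Le x.

Definition Generic (M : V -> Prop) (P Le : V) (G : V -> Prop) : Prop :=
  (forall p, G p -> mem p P) /\
  (exists p, G p) /\
  (forall p q, G p -> mem q P -> le Le p q -> G q) /\
  (forall p q, G p -> G q -> exists r, G r /\ le Le r p /\ le Le r q) /\
  (forall D, M D -> (forall d, mem d D -> mem d P) ->
     (forall p, mem p P -> exists d, mem d D /\ le Le d p) ->
     exists d, mem d D /\ G d).

(* ---------- Interpretation of names: x_G = a.
   One recursion step for a candidate (partial) interpretation H. *)
Definition ValStep (P Le : V) (G : V -> Prop) (H : V -> V -> Prop) (x b : V) : Prop :=
  (exists c u p, mem c x /\ IsPair c u p /\ atom u /\ G p /\ b = u) \/
  (~ (exists c u p, mem c x /\ IsPair c u p /\ atom u /\ G p) /\ isSet b /\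
   forall z, mem z b <-> exists c y p, mem c x /\ IsPair c y p /\ IsName P Le y /\ G p /\ H y z).

(* H is a correct interpretation on its (downward closed) domain *)
Definition ValFun (P Le : V) (G : V -> Prop) (H : V -> V -> Prop) : Prop :=
  (forall x b b', H x b -> H x b' -> b = b') /\
  (forall x b, H x b -> ValStep P Le G H x b) /\
  (forall x b, H x b -> forall c y p, mem c x -> IsPair c y p -> IsName P Le y ->
       exists z, H y z).

Definition Val (P Le : V) (G : V -> Prop) (x a : V) : Prop :=
  exists H, ValFun P Le G H /\ H x a.

(* p ||- v = w : for every M-generic G with p in G, M[G] |= v_G = w_G,
   i.e. (equality being absolute for the transitive M[G]) v_G = w_G. *)
Definition ForcesEq (M : V -> Prop) (P Le p v w : V) : Prop :=
  forall G, Generic M P Le G -> G p ->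
    exists a, Val P Le G v a /\ Val P Le G w a.

End ZFU.

(* Main.v *)
Require Import Defs.
From Stdlib Require Import Classical Setoid Morphisms Relations Wellfounded Lia Arith.

Definition Sing {V} (mem : V -> V -> Prop) atom (z x : V) := isSet atom z /\ forall w, mem w z <-> w = x.
Definition Dbl {V} (mem : V -> V -> Prop) atom (z x y : V) := isSet atom z /\ forall w, mem w z <-> (w = x \/ w = y).

Lemma sing_ex {V} mem (atom : V -> Prop) (HV : Ambient mem atom) x : exists s, Sing mem atom s x.
Proof. destruct (amb_pair _ _ HV x x) as [s [Hs H]]. exists s; split; auto.
  intro w; rewrite H; tauto. Qed.
Lemma dbl_ex {V} mem (atom : V -> Prop) (HV : Ambient mem atom) x y : exists s, Dbl mem atom s x y.
Proof. destruct (amb_pair _ _ HV x y) as [s [Hs H]]. exists s; split; auto. Qed.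

Lemma pair_ex {V} mem (atom : V -> Prop) (HV : Ambient mem atom) x y : exists c, IsPair mem atom c x y.
Proof.
  destruct (sing_ex _ _ HV x) as [s Hs]. destruct (dbl_ex _ _ HV x y) as [t Ht].
  destruct (amb_pair _ _ HV s t) as [c [Hc H]]. exists c; split; auto.
  intro z; rewrite H; split.
  - intros [->| ->]; [left|right]; auto.
  - intros [[Hz Hz']|[Hz Hz']]; [left|right]; apply (amb_ext _ _ HV); auto; try apply Hs; try apply Ht;
    intro w; [rewrite Hz'; symmetry; apply Hs | rewrite Hz'; symmetry; apply Ht].
Qed.

Lemma pair_uniq {V} mem (atom : V -> Prop) (HV : Ambient mem atom) c c' x y :
  IsPair mem atom c x y -> IsPair mem atom c' x y -> c = c'.
Proof. intros [H1 H2] [H1' H2']. apply (amb_ext _ _ HV); auto. intro z; rewrite H2, H2'; tauto. Qed.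

Lemma pair_inj {V} mem (atom : V -> Prop) (HV : Ambient mem atom) c x y x' y' :
  IsPair mem atom c x y -> IsPair mem atom c x' y' -> x = x' /\ y = y'.
Proof.
  intros [_ H] [_ H'].
  assert (Ex : x = x').
  { destruct (sing_ex _ _ HV x) as [s [Hs Hs']].
    assert (mem s c) by (apply H; left; split; auto).
    apply H' in H0. destruct H0 as [[_ K]|[_ K]].
    - symmetry; apply Hs', K; auto.
    - symmetry; apply Hs', K; auto. }
  subst x'. split; auto.
  assert (Hcase : forall y0 y1, (forall z, mem z c <-> (Sing mem atom z x \/ Dbl mem atom z x y0)) ->
      (forall z, mem z c <-> (Sing mem atom z x \/ Dbl mem atom z x y1)) -> y0 = x -> y1 = y0).
  { intros y0 y1 K0 K1 ->. destruct (dbl_ex _ _ HV x y1) as [t [Ht Ht']].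
    assert (mem t c) by (apply K1; right; split; auto).
    apply K0 in H0. destruct H0 as [[_ K]|[_ K]].
    - apply K, Ht'; auto.
    - destruct (proj1 (K y1)) as [E|E]; auto; apply Ht'; auto. }
  destruct (dbl_ex _ _ HV x y) as [t [Ht Ht']].
  assert (mem t c) by (apply H; right; split; auto).
  apply H' in H0. destruct H0 as [[_ K]|[_ K]].
  - assert (y = x) by (apply K, Ht'; auto).
    symmetry. apply (Hcase y y'); auto.
  - destruct (proj1 (K y)) as [E|E]; [apply Ht'; auto| |auto].
    symmetry. apply (Hcase y y'); auto.
Qed.

Lemma pair_child {V} mem (atom : V -> Prop) (HV : Ambient mem atom) c x y :
  IsPair mem atom c x y -> exists s, mem x s /\ mem s c.
Proof. intros [_ H]. destruct (sing_ex _ _ HV x) as [s [Hs Hs']]. exists s; split.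
  apply Hs'; auto. apply H; left; split; auto. Qed.

Lemma child_lt {V} mem (atom : V -> Prop) (HV : Ambient mem atom) c x y p :
  mem c x -> IsPair mem atom c y p -> clos_trans V mem y x.
Proof. intros Hc Hp. destruct (pair_child _ _ HV _ _ _ Hp) as [s [H1 H2]].
  eapply t_trans; [apply t_step; eauto|]. eapply t_trans; apply t_step; eauto. Qed.

Lemma le_mem {V} mem (atom : V -> Prop) (HV : Ambient mem atom) M P Le r p :
  ForcingPoset mem atom M P Le -> le mem atom Le r p -> mem r P /\ mem p P.
Proof. intros HP [c [Hc Hp]]. destruct HP as (_&_&_&_&HL&_).
  destruct (HL c Hc) as (a&b&Hab&Ha&Hb). destruct (pair_inj _ _ HV _ _ _ _ _ Hp Hab); subst; auto. Qed.

Lemma filter_compat {V} mem (atom : V -> Prop) M P Le G p q :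
  Generic mem atom M P Le G -> G p -> G q -> compatible mem atom P Le p q.
Proof. intros (H1&_&_&H4&_) Hp Hq. destruct (H4 p q Hp Hq) as (r&Hr&?&?). exists r; auto. Qed.

Lemma val_uniq {V} mem (atom : V -> Prop) (HV : Ambient mem atom) M P Le G
  (HG : Generic mem atom M P Le G) :
  forall x, IsName mem atom P Le x -> forall H H' b b', ValFun mem atom P Le G H -> ValFun mem atom P Le G H' ->
   H x b -> H' x b' -> b = b'.
Proof.
  intro x. induction x as [x IH] using (well_founded_induction (wf_clos_trans _ _ (amb_wf _ _ HV))).
  intros Hn H H' b b' HF HF' Hb Hb'.
  pose proof Hb as Sb. apply (proj1 (proj2 HF)) in Sb.
  pose proof Hb' as Sb'. apply (proj1 (proj2 HF')) in Sb'.
  destruct Hn as [Hxs Hxc Hxa].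
  destruct Sb as [(c&u&p&Hc&Hcp&Hu&Hp&->)|[Hna [Hbs Hbm]]];
  destruct Sb' as [(c'&u'&p'&Hc'&Hcp'&Hu'&Hp'&->)|[Hna' [Hbs' Hbm']]].
  - apply NNPP; intro Hne. eapply (Hxa c c' u p u' p'); eauto. eapply filter_compat; eauto.
  - exfalso; apply Hna'; eauto 10.
  - exfalso; apply Hna; eauto 10.
  - apply (amb_ext _ _ HV); auto. intro z. rewrite Hbm, Hbm'. split.
    + intros (c&y&p&Hc&Hcp&Hy&Hp&Hz). exists c, y, p; split; [auto|split; [auto|split; [auto|split; [auto|]]]].
      destruct (proj2 (proj2 HF') x b' Hb' c y p Hc Hcp Hy) as [z' Hz'].
      assert (E : z = z') by (eapply (IH y); [eapply child_lt; eauto|exact Hy|exact HF|exact HF'|exact Hz|exact Hz']). subst; auto.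
    + intros (c&y&p&Hc&Hcp&Hy&Hp&Hz). exists c, y, p; split; [auto|split; [auto|split; [auto|split; [auto|]]]].
      destruct (proj2 (proj2 HF) x b Hb c y p Hc Hcp Hy) as [z' Hz'].
      assert (E : z' = z) by (eapply (IH y); [eapply child_lt; eauto|exact Hy|exact HF|exact HF'|exact Hz'|exact Hz]). subst; auto.
Qed.

Definition VV {V} (mem : V -> V -> Prop) atom P Le G (y z : V) :=
  IsName mem atom P Le y /\ Val mem atom P Le G y z.

Lemma VV_fun {V} mem (atom : V -> Prop) (HV : Ambient mem atom) M P Le G
  (HG : Generic mem atom M P Le G) : ValFun mem atom P Le G (VV mem atom P Le G).
Proof.
  split; [|split].
  - intros x b b' [Hn [H [HF Hb]]] [_ [H' [HF' Hb']]]. exact (val_uniq _ _ HV _ _ _ _ HG x Hn H H' b b' HF HF' Hb Hb').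
  - intros x b [Hn [H [HF Hb]]]. pose proof Hb as S. apply (proj1 (proj2 HF)) in S.
    destruct S as [A|[Hna [Hbs Hbm]]]; [left; auto|right; split; [auto|split; [auto|]]].
    intro z; rewrite Hbm; split.
    + intros (c&y&p&Hc&Hcp&Hy&Hp&Hz). exists c, y, p; split; [auto|split; [auto|split; [auto|split; [auto|]]]].
      split; auto. exists H; auto.
    + intros (c&y&p&Hc&Hcp&Hy&Hp&[_ [H2 [HF2 Hz]]]). exists c, y, p; split; [auto|split; [auto|split; [auto|split; [auto|]]]].
      destruct (proj2 (proj2 HF) x b Hb c y p Hc Hcp Hy) as [z' Hz'].
      assert (E : z' = z) by (eapply (val_uniq _ _ HV _ _ _ _ HG y Hy H H2); eauto). subst; auto.
  - intros x b [Hn [H [HF Hb]]] c y p Hc Hcp Hy.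
    destruct (proj2 (proj2 HF) x b Hb c y p Hc Hcp Hy) as [z' Hz']. exists z'. split; auto. exists H; auto.
Qed.

Lemma ct_irrefl {V} (R : V -> V -> Prop) (Hwf : well_founded R) : forall x, ~ R x x.
Proof. intro x. induction x as [x IH] using (well_founded_induction Hwf). intro H. exact (IH x H H). Qed.

Lemma val_ex {V} mem (atom : V -> Prop) (HV : Ambient mem atom) M P Le G
  (HG : Generic mem atom M P Le G) :
  forall x, IsName mem atom P Le x -> exists b, Val mem atom P Le G x b.
Proof.
  pose proof (VV_fun _ _ HV _ _ _ _ HG) as HVF.
  intro x. induction x as [x IH] using (well_founded_induction (wf_clos_trans _ _ (amb_wf _ _ HV))).
  intro Hn.
  destruct (classic (exists b, VV mem atom P Le G x b)) as [[b [_ Hb]]|Hnv]; [exists b; auto|].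
  assert (Hb : exists b, ValStep mem atom P Le G (VV mem atom P Le G) x b).
  { destruct (classic (exists c u p, mem c x /\ IsPair mem atom c u p /\ atom u /\ G p)) as [(c&u&p&?&?&?&?)|Hna].
    - exists u; left; exists c, u, p; auto.
    - destruct (amb_repl _ _ HV (fun c z => exists y p, IsPair mem atom c y p /\ IsName mem atom P Le y /\ G p /\ VV mem atom P Le G y z) x)
        as [b [Hbs Hbm]].
      + intros c z z' _ (y&p&Hp&Hy&Gp&Hz) (y'&p'&Hp'&Hy'&Gp'&Hz').
        destruct (pair_inj _ _ HV _ _ _ _ _ Hp Hp'); subst. eapply (proj1 HVF); eauto.
      + exists b; right; split; [auto|split; [auto|]]. intro z; rewrite Hbm. split.
        * intros (c&Hc&y&p&?&?&?&?). exists c, y, p; auto.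
        * intros (c&y&p&?&?&?&?&?). exists c; split; auto. exists y, p; auto. }
  destruct Hb as [b Hb].
  exists b, (fun y z => VV mem atom P Le G y z \/ (y = x /\ z = b)). split; [|right; auto].
  assert (Hnc : forall y z c p, VV mem atom P Le G y z -> mem c y -> IsPair mem atom c x p -> False).
  { intros y z c p Hyz Hc Hcp. apply Hnv. destruct (proj2 (proj2 HVF) y z Hyz c x p Hc Hcp Hn) as [z' Hz'].
    exists z'; auto. }
  split; [|split].
  - intros y z z' [A|[-> ->]] [A'|[E ->]].
    + eapply (proj1 HVF); eauto.
    + subst; exfalso; apply Hnv; eauto.
    + exfalso; apply Hnv; eauto.
    + auto.
  - intros y z [A|[-> ->]].
    + pose proof A as S. apply (proj1 (proj2 HVF)) in S. destruct S as [S|[S1 [S2 S3]]]; [left; auto|right; split; [auto|split; [auto|]]].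
      intro w; rewrite S3; split.
      * intros (c&y'&p&?&?&?&?&?). exists c, y', p; auto 10.
      * intros (c&y'&p&Hc&Hcp&?&?&[K|[-> ->]]); [exists c, y', p; auto 10|].
        exfalso; eapply Hnc; eauto.
    + destruct Hb as [S|[S1 [S2 S3]]]; [left; auto|right; split; [auto|split; [auto|]]].
      intro w; rewrite S3; split.
      * intros (c&y'&p&?&?&?&?&?). exists c, y', p; auto 10.
      * intros (c&y'&p&Hc&Hcp&?&?&[K|[-> ->]]); [exists c, y', p; auto 10|].
        exfalso. apply (ct_irrefl _ (wf_clos_trans _ _ (amb_wf _ _ HV)) x). eapply child_lt; eauto.
  - intros y z [A|[-> ->]] c y' p Hc Hcp Hy'.
    + destruct (proj2 (proj2 HVF) y z A c y' p Hc Hcp Hy') as [z' Hz']. exists z'; auto.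
    + destruct (IH y') as [z' Hz']; [eapply child_lt; eauto|auto|]. exists z'; left; split; auto.
Qed.


Lemma le_trans' {V} mem (atom : V -> Prop) (HV : Ambient mem atom) M P Le a b c :
  ForcingPoset mem atom M P Le -> le mem atom Le a b -> le mem atom Le b c -> le mem atom Le a c.
Proof. intros HP H1 H2. pose proof (le_mem _ _ HV _ _ _ _ _ HP H1). pose proof (le_mem _ _ HV _ _ _ _ _ HP H2).
  destruct HP as (_&_&_&_&_&_&T&_). eapply T; eauto; tauto. Qed.

Lemma mix_props {V} (mem : V -> V -> Prop) (atom : V -> Prop)
  (HV : Ambient mem atom)
  (M : V -> Prop)
  (P Le : V) (HP : ForcingPoset mem atom M P Le)
  (f : V)
  (Hffun : forall c d p w w', mem c f -> mem d f ->
      IsPair mem atom c p w -> IsPair mem atom d p w' -> w = w')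
  (HfdomP : forall c p w, mem c f -> IsPair mem atom c p w -> mem p P)
  (Hfanti : forall c d p w q w', mem c f -> mem d f ->
      IsPair mem atom c p w -> IsPair mem atom d q w' -> p <> q ->
      ~ compatible mem atom P Le p q)
  (Hfval : forall c p w, mem c f -> IsPair mem atom c p w ->
      M w /\ IsName mem atom P Le w)
  (v : V) (Hvs : isSet atom v)
  (Hvm : forall c, mem c v <-> exists d p w e y s r, mem d f /\ IsPair mem atom d p w /\ mem e w /\
       IsPair mem atom e y s /\ IsPair mem atom c y r /\ mem r P /\ le mem atom Le r p /\ le mem atom Le r s) :
  IsName mem atom P Le v /\
    forall c p w, mem c f -> IsPair mem atom c p w ->
      ForcesEq mem atom M P Le p v w.
Proof.
  assert (Hvn : IsName mem atom P Le v).
  { constructor; auto.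
    + intros c Hc. apply Hvm in Hc. destruct Hc as (d&p&w&e&y&s&r&Hd&Hdp&He&Hep&Hcp&Hr&_&_).
      exists y, r; split; [auto|split; [auto|]].
      destruct (Hfval d p w Hd Hdp) as [_ [_ Hw _]]. destruct (Hw e He) as (y'&s'&Hp'&_&K).
      destruct (pair_inj _ _ HV _ _ _ _ _ Hep Hp'); subst; auto.
    + intros c c' a r y q Hc Hc' Hcp Hcp' Ha Hne [t [Ht [Htr Htq]]].
      apply Hvm in Hc. destruct Hc as (d&p&w&e&y0&s&r0&Hd&Hdp&He&Hep&Hcp0&Hr&Hrp&Hrs).
      apply Hvm in Hc'. destruct Hc' as (d'&p'&w'&e'&y1&s'&r1&Hd'&Hdp'&He'&Hep'&Hcp1&Hr'&Hrp'&Hrs').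
      destruct (pair_inj _ _ HV _ _ _ _ _ Hcp Hcp0); subst.
      destruct (pair_inj _ _ HV _ _ _ _ _ Hcp' Hcp1); subst.
      destruct (classic (p = p')) as [<-|Hpp].
      * assert (w' = w) by (eapply Hffun; [exact Hd'|exact Hd|exact Hdp'|exact Hdp]). subst w'.
        destruct (Hfval d p w Hd Hdp) as [_ [_ _ Hw]].
        apply (Hw e e' y0 s y1 s' He He' Hep Hep' Ha Hne).
        exists t; split; [auto|split]; [exact (le_trans' _ _ HV _ _ _ t r0 s HP Htr Hrs)|exact (le_trans' _ _ HV _ _ _ t r1 s' HP Htq Hrs')].
      * apply (Hfanti d d' p w p' w' Hd Hd' Hdp Hdp' Hpp).
        exists t; split; [auto|split]; [exact (le_trans' _ _ HV _ _ _ t r0 p HP Htr Hrp)|exact (le_trans' _ _ HV _ _ _ t r1 p' HP Htq Hrp')].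
  }
  split; [exact Hvn|].
  - intros c0 p w Hc0 Hc0p G HG Gp.
    assert (HGP : forall q, G q -> mem q P) by apply HG.
    assert (HGup : forall q r, G q -> le mem atom Le q r -> G r).
    { intros q r Gq Hqr. destruct HG as (_&_&U&_). eapply U; eauto. eapply le_mem; eauto. }
    assert (Hkey : forall c y r, mem c v -> IsPair mem atom c y r -> G r ->
        exists e s, mem e w /\ IsPair mem atom e y s /\ G s).
    { intros c y r Hc Hcp Gr. apply Hvm in Hc. destruct Hc as (d&p'&w'&e&y0&s&r0&Hd&Hdp&He&Hep&Hcp0&Hr&Hrp&Hrs).
      destruct (pair_inj _ _ HV _ _ _ _ _ Hcp Hcp0); subst.
      assert (p' = p).
      { apply NNPP; intro Hne. eapply (Hfanti d c0 p' w' p w); eauto. eapply filter_compat; eauto. }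
      subst p'. assert (w' = w) by (eapply Hffun; [exact Hd|exact Hc0|exact Hdp|exact Hc0p]). subst w'.
      exists e, s; eauto. }
    assert (Hconv : forall e y s, mem e w -> IsPair mem atom e y s -> G s ->
        exists c r, mem c v /\ IsPair mem atom c y r /\ G r).
    { intros e y s He Hep Gs. destruct HG as (_&_&_&Dir&_). destruct (Dir p s Gp Gs) as (r&Gr&Hrp&Hrs).
      destruct (pair_ex _ _ HV y r) as [c Hc]. exists c, r; split; [|auto].
      apply Hvm. assert (mem r P) by auto. exists c0, p, w, e, y, s, r. do 7 (split; [assumption|]). assumption. }
    destruct (Hfval c0 p w Hc0 Hc0p) as [_ Hwn].
    destruct (val_ex _ _ HV _ _ _ _ HG w Hwn) as [a Ha].
    destruct (val_ex _ _ HV _ _ _ _ HG v Hvn) as [b Hb].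
    pose proof (VV_fun _ _ HV _ _ _ _ HG) as HVF.
    assert (Sa : ValStep mem atom P Le G (VV mem atom P Le G) w a) by (apply HVF; split; auto).
    assert (Sb : ValStep mem atom P Le G (VV mem atom P Le G) v b) by (apply HVF; split; auto).
    enough (b = a) by (subst; exists a; auto).
    destruct Hwn as [Hws Hwc Hwa].
    destruct Sa as [(e&u&s&He&Hep&Hu&Gs&->)|[Hna [Has Ham]]];
    destruct Sb as [(c&u'&r&Hc&Hcp&Hu'&Gr&->)|[Hnb [Hbs Hbm]]].
    + destruct (Hkey c u' r Hc Hcp Gr) as (e'&s'&He'&Hep'&Gs').
      apply NNPP; intro Hne. eapply (Hwa e' e u' s' u s); eauto. eapply filter_compat; eauto.
    + exfalso. destruct (Hconv e u s He Hep Gs) as (c&r&?&?&?). apply Hnb; exists c, u, r; auto.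
    + exfalso. destruct (Hkey c u' r Hc Hcp Gr) as (e'&s'&He'&Hep'&Gs'). apply Hna; exists e', u', s'; auto.
    + apply (amb_ext _ _ HV); auto. intro z. rewrite Ham, Hbm. split.
      * intros (c&y&r&Hc&Hcp&Hy&Gr&Hz). destruct (Hkey c y r Hc Hcp Gr) as (e'&s'&He'&Hep'&Gs').
        exists e', y, s'; auto.
      * intros (e&y&s&He&Hep&Hy&Gs&Hz). destruct (Hconv e y s He Hep Gs) as (c&r&?&?&?).
        exists c, y, r; auto.
Qed.

Definition Fnot a := Fimp a Fbot.
Definition Fand a b := Fnot (Fimp a (Fnot b)).
Definition For a b := Fimp (Fnot a) b.
Definition Fiff a b := Fand (Fimp a b) (Fimp b a).
Definition Fex i a := Fnot (Fall i (Fnot a)).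

Section Sat.
Context {V : Type} (mem : V -> V -> Prop) (atom : V -> Prop) (M : V -> Prop).
Lemma sat_not e a : sat mem atom M e (Fnot a) <-> ~ sat mem atom M e a. Proof. simpl; tauto. Qed.
Lemma sat_and e a b : sat mem atom M e (Fand a b) <-> sat mem atom M e a /\ sat mem atom M e b.
Proof. simpl. split; [intro H; apply NNPP; tauto|tauto]. Qed.
Lemma sat_or e a b : sat mem atom M e (For a b) <-> sat mem atom M e a \/ sat mem atom M e b.
Proof. simpl. split; [intro H; apply NNPP; tauto|tauto]. Qed.
Lemma sat_iff e a b : sat mem atom M e (Fiff a b) <-> (sat mem atom M e a <-> sat mem atom M e b).
Proof. unfold Fiff; rewrite sat_and. simpl. tauto. Qed.
Lemma sat_ex e i a : sat mem atom M e (Fex i a) <-> exists x, M x /\ sat mem atom M (upd e i x) a.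
Proof. simpl. split.
  - intro H; apply NNPP; intro H'; apply H; intros x Hx Hs; apply H'; eauto.
  - intros [x [Hx Hs]] H; eapply H; eauto. Qed.
Lemma sat_all e i a : sat mem atom M e (Fall i a) <-> forall x, M x -> sat mem atom M (upd e i x) a.
Proof. reflexivity. Qed.
Lemma sat_imp e a b : sat mem atom M e (Fimp a b) <-> (sat mem atom M e a -> sat mem atom M e b). Proof. reflexivity. Qed.
Lemma sat_mem e i j : sat mem atom M e (Fmem i j) <-> mem (e i) (e j). Proof. reflexivity. Qed.
Lemma sat_eq e i j : sat mem atom M e (Feq i j) <-> e i = e j. Proof. reflexivity. Qed.
Lemma sat_atom e i : sat mem atom M e (Fatom i) <-> atom (e i). Proof. reflexivity. Qed.
End Sat.

Definition RelPair {V} (mem : V -> V -> Prop) (atom : V -> Prop) (M : V -> Prop) (c x y : V) :=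
  ~ atom c /\ forall z, M z -> (mem z c <-> ((~ atom z /\ forall w, M w -> (mem w z <-> w = x)) \/
                                            (~ atom z /\ forall w, M w -> (mem w z <-> (w = x \/ w = y))))).

Definition PairF i j k := Fand (Fnot (Fatom i)) (Fall 100 (Fiff (Fmem 100 i)
   (For (Fand (Fnot (Fatom 100)) (Fall 101 (Fiff (Fmem 101 100) (Feq 101 j))))
        (Fand (Fnot (Fatom 100)) (Fall 101 (Fiff (Fmem 101 100) (For (Feq 101 j) (Feq 101 k)))))))).

Ltac satsimp := repeat first [setoid_rewrite sat_iff | setoid_rewrite sat_ex | setoid_rewrite sat_and | setoid_rewrite sat_or
   | setoid_rewrite sat_not | setoid_rewrite sat_ex | setoid_rewrite sat_all | setoid_rewrite sat_mem
   | setoid_rewrite sat_eq | setoid_rewrite sat_atom | setoid_rewrite sat_imp].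

Lemma PairF_sat {V} mem (atom : V -> Prop) M e i j k : i < 100 -> j < 100 -> k < 100 ->
  (sat mem atom M e (PairF i j k) <-> RelPair mem atom M (e i) (e j) (e k)).
Proof.
  intros Hi Hj Hk. unfold PairF. satsimp.
  assert (E1 : Nat.eqb i 100 = false) by (apply Nat.eqb_neq; lia).
  assert (E2 : Nat.eqb i 101 = false) by (apply Nat.eqb_neq; lia).
  assert (E3 : Nat.eqb j 100 = false) by (apply Nat.eqb_neq; lia).
  assert (E4 : Nat.eqb j 101 = false) by (apply Nat.eqb_neq; lia).
  assert (E5 : Nat.eqb k 100 = false) by (apply Nat.eqb_neq; lia).
  assert (E6 : Nat.eqb k 101 = false) by (apply Nat.eqb_neq; lia).
  unfold upd. simpl. rewrite ?E1, ?E2, ?E3, ?E4, ?E5, ?E6. unfold RelPair. reflexivity.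
  all: exact M.
Qed.

Definition MainF :=
  Fex 4 (Fex 5 (Fex 6 (Fex 7 (Fex 8 (Fex 9 (Fex 10 (Fex 11 (Fex 12
   (Fand (Fmem 9 1) (Fand (PairF 9 4 5) (Fand (Fmem 10 5) (Fand (PairF 10 6 7) (Fand (PairF 0 6 8)
   (Fand (Fmem 8 2) (Fand (Fmem 11 3) (Fand (PairF 11 8 4) (Fand (Fmem 12 3) (PairF 12 8 7)))))))))))))))))).

Lemma MainF_sat {V} mem (atom : V -> Prop) M e :
  sat mem atom M e MainF <->
  exists p w y s r d e' g h, M p /\ M w /\ M y /\ M s /\ M r /\ M d /\ M e' /\ M g /\ M h /\
    mem d (e 1) /\ RelPair mem atom M d p w /\ mem e' w /\ RelPair mem atom M e' y s /\
    RelPair mem atom M (e 0) y r /\ mem r (e 2) /\ mem g (e 3) /\ RelPair mem atom M g r p /\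
    mem h (e 3) /\ RelPair mem atom M h r s.
Proof.
  unfold MainF. split.
  - intro H.
    apply sat_ex in H; destruct H as [p [Hp H]].
    apply sat_ex in H; destruct H as [w [Hw H]].
    apply sat_ex in H; destruct H as [y [Hy H]].
    apply sat_ex in H; destruct H as [s [Hs H]].
    apply sat_ex in H; destruct H as [r [Hr H]].
    apply sat_ex in H; destruct H as [d [Hd H]].
    apply sat_ex in H; destruct H as [e' [He H]].
    apply sat_ex in H; destruct H as [g [Hg H]].
    apply sat_ex in H; destruct H as [h [Hh H]].
    repeat match goal with
    | H : sat _ _ _ _ (Fand _ _) |- _ => apply sat_and in H; destruct H as [? H]
    end.
    repeat match goal with
    | H : sat _ _ _ _ (PairF _ _ _) |- _ => apply PairF_sat in H; [|lia|lia|lia]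
    end.
    unfold upd in *; simpl in *.
    exists p, w, y, s, r, d, e', g, h. repeat (split; [assumption|]). assumption.
  - intros (p&w&y&s&r&d&e'&g&h&Hp&Hw&Hy&Hs&Hr&Hd&He&Hg&Hh&H1&H2&H3&H4&H5&H6&H7&H8&H9&H10).
    apply sat_ex; exists p; split; [auto|].
    apply sat_ex; exists w; split; [auto|].
    apply sat_ex; exists y; split; [auto|].
    apply sat_ex; exists s; split; [auto|].
    apply sat_ex; exists r; split; [auto|].
    apply sat_ex; exists d; split; [auto|].
    apply sat_ex; exists e'; split; [auto|].
    apply sat_ex; exists g; split; [auto|].
    apply sat_ex; exists h; split; [auto|].
    repeat match goal with |- sat _ _ _ _ (Fand _ _) => apply sat_and; split end.
    all: try (apply PairF_sat; [lia|lia|lia|]).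
    all: unfold upd; simpl; assumption.
Qed.

Lemma pair_child2 {V} mem (atom : V -> Prop) (HV : Ambient mem atom) c x y :
  IsPair mem atom c x y -> exists s, mem y s /\ mem s c.
Proof. intros [_ H]. destruct (dbl_ex _ _ HV x y) as [s [Hs Hs']]. exists s; split.
  apply Hs'; auto. apply H; right; split; auto. Qed.

Lemma pair_of {V} mem (atom : V -> Prop) (HV : Ambient mem atom) c s t x y :
  Dbl mem atom s x x -> Dbl mem atom t x y -> Dbl mem atom c s t -> IsPair mem atom c x y.
Proof.
  intros Hs Ht [Hc H]. split; auto.
  intro z; rewrite H; split.
  - intros [->| ->]; [left|right]; [split; [apply Hs|intro w; rewrite (proj2 Hs); tauto]|apply Ht].
  - intros [[Hz Hz']|[Hz Hz']]; [left|right]; apply (amb_ext _ _ HV); auto; try apply Hs; try apply Ht;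
    intro w; [rewrite Hz', (proj2 Hs); tauto | rewrite Hz'; symmetry; apply Ht].
Qed.

Section MS.
Context {V : Type} (mem : V -> V -> Prop) (atom : V -> Prop) (HV : Ambient mem atom)
  (M : V -> Prop) (HT : forall x y, M x -> mem y x -> M y) (HZ : ModelZFUR mem atom M).

Lemma M_dbl x y : M x -> M y -> exists z, M z /\ Dbl mem atom z x y.
Proof.
  intros Hx Hy. destruct (m_pair _ _ _ HZ x y Hx Hy) as (z0&Hz0&Hs0&Hx0&Hy0).
  destruct (m_sep _ _ _ HZ (For (Feq 0 1) (Feq 0 2)) 0 (fun n => match n with 2 => y | _ => x end))
    with (a := z0) as (b&Hb&Hbs&Hbm); auto.
  { intro n; destruct n as [|[|[|]]]; auto. }
  exists b; split; [auto|split; [auto|]].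
  intro w; split.
  - intro Hw. assert (M w) by eauto. apply Hbm in Hw; auto. destruct Hw as [_ Hw].
    apply sat_or in Hw. exact Hw.
  - intros Hw. assert (M w) by (destruct Hw; subst; auto). apply Hbm; auto. split.
    + destruct Hw; subst; auto.
    + apply sat_or. exact Hw.
Qed.

Lemma M_pair x y : M x -> M y -> exists c, M c /\ IsPair mem atom c x y.
Proof.
  intros Hx Hy. destruct (M_dbl x x Hx Hx) as (s&Hs&Ds). destruct (M_dbl x y Hx Hy) as (t&Ht&Dt).
  destruct (M_dbl s t Hs Ht) as (c&Hc&Dc). exists c; split; auto. eapply pair_of; eauto.
Qed.

Lemma M_sing_eq z x : Sing mem atom z x -> M x -> M z.
Proof. intros [Hz H] Hx. destruct (M_dbl x x Hx Hx) as (s&Hs&[Ds Ds']).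
  replace z with s; auto. apply (amb_ext _ _ HV); auto. intro w; rewrite H, Ds'; tauto. Qed.
Lemma M_dbl_eq z x y : Dbl mem atom z x y -> M x -> M y -> M z.
Proof. intros [Hz H] Hx Hy. destruct (M_dbl x y Hx Hy) as (s&Hs&[Ds Ds']).
  replace z with s; auto. apply (amb_ext _ _ HV); auto. intro w; rewrite H, Ds'; tauto. Qed.

Lemma relpair_iff c x y : M c -> M x -> M y -> (RelPair mem atom M c x y <-> IsPair mem atom c x y).
Proof.
  intros Hc Hx Hy. split.
  - intros [Hcs H]. split; auto. intro z. split.
    + intro Hz. assert (Mz : M z) by eauto. apply H in Hz; auto.
      destruct Hz as [[Ha K]|[Ha K]]; [left|right]; split; auto; intro w; split.
      * intro Hw; apply K; eauto.
      * intro E; subst; apply K; auto.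
      * intro Hw; apply K; eauto.
      * intro E; apply K; auto. destruct E; subst; auto.
    + intro Hz. assert (Mz : M z).
      { destruct Hz as [Hz|Hz]; [eapply M_sing_eq; eauto|eapply M_dbl_eq; eauto]. }
      apply H; auto. destruct Hz as [[Ha K]|[Ha K]]; [left|right]; split; auto; intros w _; apply K.
  - intros [Hcs H]. split; auto. intros z Mz. rewrite H. split.
    + intros [[Ha K]|[Ha K]]; [left|right]; split; auto; intros w _; apply K.
    + intros [[Ha K]|[Ha K]]; [left|right]; split; auto; intro w; split.
      * intro Hw; apply K; eauto.
      * intro E; subst; apply K; auto.
      * intro Hw; apply K; eauto.
      * intro E; apply K; auto. destruct E; subst; auto.
Qed.

Lemma M_union x : M x -> exists u, M u /\ isSet atom u /\ forall y z, mem y x -> mem z y -> mem z u.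
Proof. intro Hx. destruct (m_union _ _ _ HZ x Hx) as (u&Hu&Hus&H). exists u; split; [auto|split; [auto|]].
  intros y z Hy Hz. apply (H y z); eauto. Qed.

Lemma M_power x : M x -> exists p, M p /\ isSet atom p /\
   forall y, M y -> isSet atom y -> (forall z, mem z y -> mem z x) -> mem y p.
Proof. intro Hx. destruct (m_power _ _ _ HZ x Hx) as (p&Hp&Hps&H). exists p; split; [auto|split; [auto|]].
  intros y Hy Hys K. apply H; auto. Qed.
End MS.

Lemma construct_v {V} (mem : V -> V -> Prop) (atom : V -> Prop) (HV : Ambient mem atom)
  (M : V -> Prop) (HT : forall x y, M x -> mem y x -> M y) (HZ : ModelZFUR mem atom M)
  (P Le f : V) (HPM : M P) (HLM : M Le) (HfM : M f) :
  exists v, M v /\ isSet atom v /\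
  (forall c, mem c v <-> exists d p w e y s r, mem d f /\ IsPair mem atom d p w /\ mem e w /\
       IsPair mem atom e y s /\ IsPair mem atom c y r /\ mem r P /\ le mem atom Le r p /\ le mem atom Le r s).
Proof.
  destruct (M_union _ _ _ HT HZ f HfM) as (U1&M1&_&H1).
  destruct (M_union _ _ _ HT HZ U1 M1) as (U2&M2&_&H2).
  destruct (M_union _ _ _ HT HZ U2 M2) as (U3&M3&_&H3).
  destruct (M_union _ _ _ HT HZ U3 M3) as (U4&M4&_&H4).
  destruct (M_union _ _ _ HT HZ U4 M4) as (U5&M5&_&H5).
  destruct (M_dbl _ _ _ HT HZ U5 P M5 HPM) as (Z&MZ&[_ DZ]).
  destruct (M_union _ _ _ HT HZ Z MZ) as (B&MB&_&HB).
  assert (HB5 : forall z, mem z U5 -> mem z B) by (intros z Hz; apply (HB U5); auto; apply DZ; auto).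
  assert (HBP : forall z, mem z P -> mem z B) by (intros z Hz; apply (HB P); auto; apply DZ; auto).
  destruct (M_power _ _ _ HZ B MB) as (A1&MA1&_&HA1).
  destruct (M_power _ _ _ HZ A1 MA1) as (A&MA&HAs&HA).
  assert (HinA : forall c y r, M c -> IsPair mem atom c y r -> mem y B -> mem r B -> mem c A).
  { intros c y r Mc [Hcs Hc] Hy Hr. apply HA; auto. intros z Hz. assert (M z) by eauto.
    apply Hc in Hz. apply HA1; auto.
    - destruct Hz as [[Hzs _]|[Hzs _]]; auto.
    - intros w Hw. destruct Hz as [[_ K]|[_ K]]; apply K in Hw.
      + subst; auto.
      + destruct Hw; subst; auto. }
  assert (HinU5 : forall d p w e y s, mem d f -> IsPair mem atom d p w -> mem e w -> IsPair mem atom e y s -> mem y U5).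
  { intros d p w e y s Hd Hdp He Hey.
    destruct (pair_child2 _ _ HV _ _ _ Hdp) as (t&Ht1&Ht2).
    destruct (pair_child _ _ HV _ _ _ Hey) as (t'&Ht1'&Ht2').
    apply (H5 t'); auto. apply (H4 e); auto. apply (H3 w); auto. apply (H2 t); auto. apply (H1 d); auto. }
  set (env := fun n => match n with 2 => P | 3 => Le | _ => f end).
  destruct (m_sep _ _ _ HZ MainF 0 env) with (a := A) as (v&Mv&Hvs&Hvm); auto.
  { intro n; destruct n as [|[|[|[|]]]]; simpl; auto. }
  exists v; split; [auto|split; [auto|]].
  intro c. split.
  - intro Hc. assert (Mc : M c) by eauto. apply Hvm in Hc; auto. destruct Hc as [_ Hc].
    apply MainF_sat in Hc. unfold upd in Hc; simpl in Hc.
    destruct Hc as (p&w&y&s&r&d&e'&g&h&Mp&Mw&My&Ms&Mr&Md&Me&Mg&Mh&K1&K2&K3&K4&K5&K6&K7&K8&K9&K10).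
    rewrite (relpair_iff _ _ HV _ HT HZ) in K2, K4, K5, K8, K10 by auto.
    exists d, p, w, e', y, s, r. do 6 (split; [assumption|]). split; [exists g|exists h]; split; assumption.
  - intros (d&p&w&e&y&s&r&Hd&Hdp&He&Hep&Hcp&Hr&[g [Hg Hgp]]&[h [Hh Hhp]]).
    assert (Md : M d) by eauto.
    assert (Mp : M p) by (destruct (pair_child _ _ HV _ _ _ Hdp) as (t&?&?); eauto).
    assert (Mw : M w) by (destruct (pair_child2 _ _ HV _ _ _ Hdp) as (t&?&?); eauto).
    assert (Me : M e) by eauto.
    assert (My : M y) by (destruct (pair_child _ _ HV _ _ _ Hep) as (t&?&?); eauto).
    assert (Ms : M s) by (destruct (pair_child2 _ _ HV _ _ _ Hep) as (t&?&?); eauto).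
    assert (Mr : M r) by eauto.
    assert (Mg : M g) by eauto. assert (Mh : M h) by eauto.
    destruct (M_pair _ _ HV _ HT HZ y r My Mr) as (c'&Mc'&Hc').
    assert (c = c') by (eapply pair_uniq; eauto). subst c'.
    apply Hvm; auto. split.
    + eapply HinA; eauto.
    + apply MainF_sat. unfold upd; simpl.
      exists p, w, y, s, r, d, e, g, h.
      rewrite !(relpair_iff _ _ HV _ HT HZ) by auto.
      repeat (split; [assumption|]). assumption.
Qed.
Theorem mainTheorem13 (V : Type) (mem : V -> V -> Prop) (atom : V -> Prop)
  (HV : Ambient mem atom)
  (M : V -> Prop) (HM : CTM mem atom M)
  (P Le : V) (HP : ForcingPoset mem atom M P Le)
  (f : V) (HfM : M f) (Hfset : isSet atom f)
  (Hfpairs : forall c, mem c f -> exists p w, IsPair mem atom c p w)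
  (Hffun : forall c d p w w', mem c f -> mem d f ->
      IsPair mem atom c p w -> IsPair mem atom d p w' -> w = w')
  (HfdomP : forall c p w, mem c f -> IsPair mem atom c p w -> mem p P)
  (Hfanti : forall c d p w q w', mem c f -> mem d f ->
      IsPair mem atom c p w -> IsPair mem atom d q w' -> p <> q ->
      ~ compatible mem atom P Le p q)
  (Hfval : forall c p w, mem c f -> IsPair mem atom c p w ->
      M w /\ IsName mem atom P Le w) :
  exists v, M v /\ IsName mem atom P Le v /\
    forall c p w, mem c f -> IsPair mem atom c p w ->
      ForcesEq mem atom M P Le p v w.
Proof.
  destruct HM as (_&HT&_&HZ).
  destruct HP as (HPM&HLM&HPr) eqn:EHP.
  destruct (construct_v mem atom HV M HT HZ P Le f HPM HLM HfM) as (v&Mv&Hvs&Hvm).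
  destruct (mix_props mem atom HV M P Le HP f Hffun HfdomP Hfanti Hfval v Hvs Hvm) as [Hn Hf].
  exists v; split; [auto|split; auto].
Qed.
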